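(* Fix $\varepsilon\in\{1,-1\}$, $m\in\{1,2,5,7,8,10,11,13,14,16,17,19,22,23\}$, and a nonnegative integer $n$ such that $\delta_m(n)$ is squarefree. With $A=18(m+24n)-\varepsilon$, $B=4\varepsilon/9$, $D=-3$, $r=1/3+A^2$, the number $H(m,n)=\frac{1}{16}(2ABD+2A^2Dr+3r^2)$ is an integer.
   Context: Let $f_m(n)=62208n^2+(5184m-432\varepsilon)n+(108m^2-18\varepsilon m+1)$, let $i=1$ if $m$ is odd, $i=2$ if $m$ is even and $m\ne8,16$, and $i=4$ if $m\in\{8,16\}$, and let $\delta_m(n)=2^{1-i}(m+24n)f_m(n)$ (an integer), so that $2(m+24n)f_m(n)=2^i\delta_m(n)$. *)

(* Defs.v *)
From mathcomp Require Import all_boot all_order all_algebra.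
Set Implicit Arguments. Unset Strict Implicit. Unset Printing Implicit Defensive.
Import Order.TTheory GRing.Theory Num.Theory.
Local Open Scope ring_scope.

(* Large numerals are written factored (62208 = 256*243, 5184 = 72*72)
   since nat-based int literals overflow the stack.
   f_m(n) = 62208 n^2 + (5184 m - 432 eps) n + (108 m^2 - 18 eps m + 1) *)
Definition f_m (eps : int) (m n : nat) : int :=
  (256 * 243) * (n%:Z) ^+ 2 + ((72 * 72) * m%:Z - 432 * eps) * n%:Z
  + (108 * (m%:Z) ^+ 2 - 18 * eps * m%:Z + 1).

Definition i_m (m : nat) : nat :=
  if odd m then 1%N else if (m == 8%N) || (m == 16%N) then 4%N else 2%N.

(* delta_m(n) = 2^(1-i) (m+24n) f_m(n), i.e. the integer with
   2 (m+24n) f_m(n) = 2^i delta_m(n). *)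
Definition delta_m (eps : int) (m n : nat) : int :=
  ((2 * (m%:Z + 24 * n%:Z) * f_m eps m n) %/ (2 ^+ i_m m))%Z.

Definition squarefree (d : int) : Prop :=
  forall p : nat, prime p -> ~ ((p%:Z) ^+ 2 %| d)%Z.

Definition H_mn (eps : int) (m n : nat) : rat :=
  let A : rat := (18 * (m%:Z + 24 * n%:Z) - eps)%:~R in
  let B : rat := 4 * eps%:~R / 9 in
  let D : rat := -3 in
  let r : rat := 1 / 3 + A ^+ 2 in
  (2 * A * B * D + 2 * A ^+ 2 * D * r + 3 * r ^+ 2) / 16.

(* Main.v *)
Require Import Defs.
From mathcomp Require Import all_boot all_order all_algebra.
From mathcomp Require Import ring lra zify.
Import GRing.Theory Num.Theory.
Local Open Scope ring_scope.

Lemma keyH (e k s c : int) : (e = 1 \/ e = -1) -> (c = 1 \/ c = -1) ->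
  18 * k - e = 4 * s + c ->
  exists z : int,
  let A : rat := (18 * k - e)%:~R in
  let B : rat := 4 * e%:~R / 9 in
  let D : rat := -3 in
  let r : rat := 1 / 3 + A ^+ 2 in
  (2 * A * B * D + 2 * A ^+ 2 * D * r + 3 * r ^+ 2) / 16 = z%:~R.
Proof.
move=> he hc hA.
exists (- 3 * (16 * s^+4 + 16 * c * s^+3 + 6 * s^+2 + c * s) - 3 * k * e).
rewrite /= hA.
have hk : (k%:~R : rat) = ((4 * s + c + e)%:~R / 18).
  have -> : 4 * s + c + e = 18 * k by rewrite -hA; ring.
  by rewrite intrM /=; field.
rewrite !(intrD, intrM, intrN, mulrzBl, mulrzDr) /= hk.
case: he => ->; case: hc => ->; rewrite ?(intrD, intrM, intrN, intrX) /=; field; done.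
Qed.

Theorem lemma3p1 (eps : int) (m n : nat) :
  (eps = 1 \/ eps = -1) ->
  m \in [:: 1; 2; 5; 7; 8; 10; 11; 13; 14; 16; 17; 19; 22; 23]%N ->
  squarefree (delta_m eps m n) ->
  exists z : int, H_mn eps m n = z%:~R.
Proof.
move=> he _ _.
set k : int := (m%:Z + 24 * n%:Z).
have [s [c [hc hA]]] : exists s c : int, (c = 1 \/ c = -1) /\ 18 * k - eps = 4 * s + c.
  have hk : k = 2 * (k %/ 2)%Z + (k %% 2)%Z by rewrite {1}(divz_eq k 2); ring.
  have hr : (k %% 2)%Z = 0 \/ (k %% 2)%Z = 1.
    have h0 := modz_ge0 k (isT : (2:int) != 0). have h1 := ltz_pmod k (isT : (0:int) < 2). lia.
  set j := (k %/ 2)%Z in hk.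
  case: he => ->; case: hr => hr; rewrite hr in hk.
  - exists (9 * j), (-1); split; [by right|]; rewrite hk; ring.
  - exists (9 * j + 4), 1; split; [by left|]; rewrite hk; ring.
  - exists (9 * j), 1; split; [by left|]; rewrite hk; ring.
  - exists (9 * j + 5), (-1); split; [by right|]; rewrite hk; ring.
have [z hz] := @keyH eps k s c he hc hA.
by exists z; rewrite /H_mn -hz.
Qed.
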